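(* Let $G=(V,E)$ be a finite, undirected, unweighted, 2-vertex-connected graph with $n=|V|$ vertices. Suppose $T$ is a minimum spanning tree of $G$ and $C_T$ is a simple cycle in $G$ whose vertex set contains every vertex that has odd degree in $T$. Then $G$ has a TSP tour of length at most $4n/3$.
   Context: A TSP tour of $G$ (graph-TSP, i.e. TSP in the shortest-path metric of $G$) is a closed walk in $G$ that visits every vertex at least once; its length is the number of edges traversed, counted with multiplicity. Since $G$ is unweighted, every spanning tree of $G$ is a minimum spanning tree. The cycle $C_T$ may contain arbitrarily many vertices of even degree in $T$. *)

(* Defs.v *)
From mathcomp Require Import all_boot.
Set Implicit Arguments. Unset Strict Implicit. Unset Printing Implicit Defensive.

Section Graphs.
Variable V : finType.

Definition simple_graph (e : rel V) : Prop := symmetric e /\ irreflexive e.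

Definition connected_graph (e : rel V) : Prop := forall x y : V, connect e x y.

Definition del_vertex (e : rel V) (v : V) : rel V :=
  [rel a b | [&& e a b, a != v & b != v]].

Definition two_vertex_connected (e : rel V) : Prop :=
  2 < #|V| /\ connected_graph e /\
  forall v x y : V, x != v -> y != v -> connect (del_vertex e v) x y.

Definition simple_cycle (e : rel V) (c : seq V) : Prop :=
  [/\ 2 < size c, uniq c & cycle e c].

Definition spanning_tree (e t : rel V) : Prop :=
  [/\ symmetric t, subrel t e, connected_graph t &
      forall c : seq V, ~ simple_cycle t c].

(* minimum spanning tree of the unweighted graph e: a spanning tree with the
   minimum number of edges (all spanning trees have the same weight) *)
Definition tree_weight (t : rel V) : nat := #|[set p : V * V | t p.1 p.2]|.

Definition min_spanning_tree (e t : rel V) : Prop :=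
  spanning_tree e t /\
  forall t' : rel V, spanning_tree e t' -> tree_weight t <= tree_weight t'.

Definition degree (t : rel V) (x : V) : nat := #|[set y | t x y]|.

(* a TSP tour (graph-TSP): a closed walk x0 :: w in e (ending at x0) visiting
   every vertex; its length is the number of edges traversed, size w *)
Definition tsp_tour (e : rel V) (x0 : V) (w : seq V) : Prop :=
  [/\ path e x0 w, last x0 w = x0 & forall v : V, v \in x0 :: w].

End Graphs.

(* Main.v *)
Require Import Defs.
From mathcomp Require Import all_boot zify.
Set Implicit Arguments. Unset Strict Implicit. Unset Printing Implicit Defensive.

Section Ext.
Variable V : finType.
Variable e : rel V.
Hypothesis esym : symmetric e.
Hypothesis econn : forall x y : V, connect e x y.

Lemma exit_edge (S : pred V) x p : path e x p -> S x -> ~~ S (last x p) ->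
  exists y u, [/\ S y, ~~ S u & e y u].
Proof.
elim: p x => [|z p IH] x /=; first by move=> _ ->.
case/andP=> exz pz Sx nS.
case Sz: (S z); first exact: (IH z pz Sz nS).
by exists x, z; rewrite Sz.
Qed.

Lemma extend_walk m x0 w :
  #|[pred v | v \notin x0 :: w]| <= m -> path e x0 w -> last x0 w = x0 ->
  exists w', [/\ path e x0 w', last x0 w' = x0, (forall v, v \in x0 :: w')
     & size w' <= size w + 2 * m].
Proof.
elim: m w => [|m IH] w hc pw lw.
  exists w; split => //; last by rewrite addn0.
  move=> v; apply/negPn/negP => hv.
  by move: hc; rewrite leqn0 => /eqP/card0_eq/(_ v); rewrite inE hv.
case: (boolP [exists v, v \notin x0 :: w]) => [/existsP [v hv]|].
  have [y [u [Sy Su eyu]]] : exists y u, [/\ y \in x0 :: w, u \notin x0 :: w & e y u].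
    have /connectP [p pp lp] := econn x0 v.
    have := @exit_edge (fun z => z \in x0 :: w) x0 p pp.
    by rewrite /= mem_head -lp; move=> /(_ isT hv).
  case/splitPl: Sy pw lw hc Su => w1 w2 ly.
  rewrite cat_path last_cat => /andP [p1 p2] lw hc Su.
  have [w' [pw' lw' allw sw']] : exists w', [/\ path e x0 w', last x0 w' = x0, (forall v, v \in x0 :: w')
     & size w' <= size (w1 ++ u :: y :: w2) + 2 * m].
    apply: IH.
    - rewrite -ltnS; apply: leq_trans hc.
      rewrite [X in _ < X](cardD1 u) inE Su add1n ltnS; apply: subset_leq_card.
      apply/subsetP => z; rewrite !inE !mem_cat !in_cons.
      by case: (z == x0); case: (z \in w1); case: (z == u); case: (z \in w2); rewrite ?orbT ?orbF.
    - by rewrite cat_path p1 /= ly eyu esym eyu -ly p2.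
    - by rewrite last_cat /= -ly.
  exists w'; split => //; apply: leq_trans sw' _.
  by rewrite !size_cat /= mulnS addnCA !addnS addnA.
rewrite negb_exists => /forallP hall.
exists w; split => //; last by rewrite leq_addr.
by move=> v; move: (hall v); rewrite negbK.
Qed.
End Ext.

Section Euler.
Variable V : finType.
Variable e : rel V.
Hypothesis esy : symmetric e.

Lemma has_cons' (T : Type) (a : pred T) x s : has a (x :: s) = a x || has a s.
Proof. by []. Qed.

Definition walk := (V * seq V)%type.
Definition wfin (w : walk) := last w.1 w.2.
Definition wverts (w : walk) := w.1 :: w.2.
Definition wpath (w : walk) := path e w.1 w.2.
Definition ends (w : walk) (v : V) := (v == w.1) + (v == wfin w).
Definition endc (L : seq walk) v := sumn [seq ends w v | w <- L].
Definition covR (L : seq walk) x y := has (fun w => (x \in wverts w) && (y \in wverts w)) L.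
Definition cov (L : seq walk) v := has (fun w => v \in wverts w) L.
Definition totlen (L : seq walk) := sumn [seq size w.2 | w <- L].

Lemma reduce W1 W2 L' M : W2 \in L' -> wpath M ->
  wverts M =i [predU wverts W1 & wverts W2] ->
  size M.2 = size W1.2 + size W2.2 ->
  (forall v, ~~ odd (ends W1 v + ends W2 v + ends M v)) ->
  [/\ (all wpath (W1 :: L') -> all wpath (M :: rem W2 L')),
      ((forall v, ~~ odd (endc (W1 :: L') v)) -> forall v, ~~ odd (endc (M :: rem W2 L') v)),
      (forall x y, covR (W1 :: L') x y -> covR (M :: rem W2 L') x y),
      (forall v, cov (W1 :: L') v = cov (M :: rem W2 L') v) &
      totlen (M :: rem W2 L') = totlen (W1 :: L')].
Proof.
move=> inW2 pM vM sM pe.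
have pr := perm_to_rem inW2.
split.
- rewrite /= (perm_all _ pr) /= => /and3P [_ _ ->]; by rewrite pM.
- move=> ev v; move: (ev v) (pe v).
  have sc : forall a s, sumn (a :: s) = a + sumn s by [].
  rewrite /endc !map_cons !sc (perm_sumn (perm_map _ pr)) map_cons sc.
  move: (sumn [seq ends w v | w <- rem W2 L']) (ends W1 v) (ends W2 v) (ends M v) => r a b c.
  rewrite /= !oddD.
  by case: (odd r); case: (odd a); case: (odd b); case: (odd c).
- move=> x y; rewrite /covR /= (eq_has_r (perm_mem pr)) /= !vM !inE.
  have lem : forall a1 a2 b1 b2 h : bool, [|| a1 && b1, a2 && b2 | h] -> ((a1 || a2) && (b1 || b2) || h).
    by case; case; case; case; case.
  exact: lem.
- move=> v; rewrite /cov /= (eq_has_r (perm_mem pr)) /= !vM !inE.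
  have lem2 : forall a1 a2 h : bool, [|| a1, a2 | h] = (a1 || a2) || h by move=> *; rewrite orbA.
  exact: lem2.
- by rewrite /totlen /= (perm_sumn (perm_map _ pr)) /= sM addnA.
Qed.

Definition rwalk (w : walk) : walk := (wfin w, rev (belast w.1 w.2)).

Lemma rwalk_fin w : wfin (rwalk w) = w.1.
Proof.
case: w => x p; rewrite /rwalk /wfin /=.
case: p => [|y p] //=; by rewrite rev_cons last_rcons.
Qed.

Lemma rwalk_verts w : wverts (rwalk w) =i wverts w.
Proof.
case: w => x p v; rewrite /rwalk /wverts /wfin /=.
by rewrite [in RHS]lastI mem_rcons !in_cons mem_rev.
Qed.

Lemma rwalk_path w : wpath w -> wpath (rwalk w).
Proof.
case: w => x p; rewrite /wpath /rwalk /wfin /= rev_path.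
apply: sub_path => a b; by rewrite esy.
Qed.

Lemma rwalk_ends w v : ends (rwalk w) v = ends w v.
Proof. by rewrite /ends rwalk_fin /= addnC. Qed.

Lemma rwalk_size w : size (rwalk w).2 = size w.2.
Proof. by rewrite /= size_rev size_belast. Qed.

Lemma endc_pos L v : 0 < endc L v -> exists2 w, w \in L & 0 < ends w v.
Proof.
elim: L => [|w L IH] //=; rewrite /endc /=.
case: (posnP (ends w v)) => [->|hp] /=; last by exists w => //; rewrite mem_head.
move=> /IH [w' h1 h2]; exists w' => //; by rewrite in_cons h1 orbT.
Qed.

Lemma euler n L : size L = n.+1 -> all wpath L -> (forall v, ~~ odd (endc L v)) ->
  (forall x y, cov L x -> cov L y -> connect (covR L) x y) ->
  exists x0 w, [/\ path e x0 w, last x0 w = x0, size w = totlen L &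
     forall v, cov L v -> v \in x0 :: w].
Proof.
elim: n L => [|n IH] [|W1 L'] //.
  case: L' => // _ /= /andP [pW _] ev _.
  case: (eqVneq (wfin W1) W1.1) => hcl.
    exists W1.1, W1.2; split => //; first by rewrite /totlen /= addn0.
    by move=> v; rewrite /cov /= orbF.
  move: (ev W1.1); by rewrite /endc /= /ends eqxx eq_sym (negbTE hcl).
move=> /= [sL] allp ev conn.
suff [W2 [M [inW2 pM vM sM pe]]] : exists W2 M, [/\ W2 \in L', wpath M,
  wverts M =i [predU wverts W1 & wverts W2],
  size M.2 = size W1.2 + size W2.2 &
  (forall v, ~~ odd (ends W1 v + ends W2 v + ends M v))].
  have [r1 r2 r3 r4 r5] := reduce inW2 pM vM sM pe.
  have sL2 : size (M :: rem W2 L') = n.+1 by rewrite /= size_rem // sL.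
  have conn2 : forall x y, cov (M :: rem W2 L') x -> cov (M :: rem W2 L') y ->
      connect (covR (M :: rem W2 L')) x y.
    move=> x y; rewrite -!r4 => cx cy.
    apply: connect_sub (conn x y cx cy) => a b hab; apply: connect1; exact: r3.
  have [x0 [w [pw lw sw cw]]] := IH (M :: rem W2 L') sL2 (r1 allp) (r2 ev) conn2.
  exists x0, w; split => //; first by rewrite sw r5.
  by move=> v hv; apply: cw; rewrite -r4.
case: (eqVneq (wfin W1) W1.1) => hcl.
  (* closed walk: splice into another walk meeting it *)
  have [W2 inW2 [x xW2 xW1]] : exists2 W2, W2 \in L' & exists2 x, x \in wverts W2 & x \in wverts W1.
    case: (boolP (has (fun w => has (fun z => z \in wverts W1) (wverts w)) L')) => hh.
      case/hasP: hh => W2 inW2 /hasP [x h1 h2]; exists W2 => //; by exists x.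
    exfalso; case: L' sL allp ev conn hh => // W3 L3 _ _ _ conn hh.
    have c1 : cov (W1 :: W3 :: L3) W1.1 by rewrite /cov /= /wverts mem_head.
    have c3 : cov (W1 :: W3 :: L3) W3.1 by rewrite /cov /= /wverts mem_head orbT.
    have cl : closed (covR (W1 :: W3 :: L3)) (wverts W1).
      move=> a b; rewrite /covR has_cons' => /orP [/andP [-> ->] //|/hasP [w inw /andP [aw bw]]].
      have := hasPn hh w inw => /hasPn hw.
      by rewrite (negbTE (hw a aw)) (negbTE (hw b bw)).
    have := closed_connect cl (conn _ _ c1 c3).
    rewrite /wverts mem_head => /esym h3.
    move/hasPn: hh => /(_ W3 (mem_head _ _)) /hasPn /(_ W3.1 (mem_head _ _)).
    by rewrite /wverts h3.
  move: allp => /andP [pW1 /allP /(_ _ inW2) pW2].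
  clear ev conn sL; case: W1 hcl xW1 pW1 => a s /= hcl xW1 pW1.
  case: W2 inW2 xW2 pW2 => b s2 inW2 xW2 pW2.
  move: hcl xW1 xW2 pW1 pW2; rewrite /wfin /wverts /wpath /= => hcl xW1 xW2 pW1 pW2.
  case/splitPl: xW1 hcl pW1 => p1 p2 lp1; rewrite last_cat lp1 cat_path lp1 => hl /andP [pp1 pp2].
  case/splitPl: xW2 inW2 pW2 => q1 q2 lq1 inW2; rewrite cat_path lq1 => /andP [pq1 pq2].
  have lp2 : last x (p2 ++ p1) = x by rewrite last_cat hl lp1.
  exists (b, q1 ++ q2), (b, q1 ++ (p2 ++ p1) ++ q2); split => //.
  - by rewrite /wpath /= !cat_path pq1 lq1 pp2 hl pp1 lp2 pq2.
  - have hx : x \in b :: q1 ++ (p2 ++ p1) ++ q2.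
      by move: (mem_last b q1); rewrite lq1 !inE !mem_cat => /orP [->|->]; rewrite ?orbT.
    have ha : a \in b :: q1 ++ (p2 ++ p1) ++ q2.
      move: (mem_last x p2); rewrite hl in_cons => /orP [/eqP ->|h] //.
      by rewrite !inE !mem_cat h !orbT.
    move=> v; rewrite /wverts /=; case: (eqVneq v a) => [->|hva].
      by rewrite ha !inE eqxx.
    rewrite !inE !mem_cat (negbTE hva) /=.
    by case: (v == b); case: (v \in q1); case: (v \in p1); case: (v \in p2); case: (v \in q2).
  - rewrite /= !size_cat; lia.
  - move=> v; rewrite /ends /wfin /= !last_cat lq1 hl lp1 hl.
    by case: (v == a); case: (v == b); case: (v == last x q2).
(* open walk: extend it by a walk starting at its end *)
move: allp => /andP [pW1 /allP allp].
have ea : 0 < endc L' (wfin W1).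
  move: (ev (wfin W1)); rewrite /endc map_cons /= {1}/ends eqxx (negbTE hcl) /=.
  by case: (sumn _).
have [W2 inW2 hW2] := endc_pos ea.
have pW2 := allp _ inW2.
have [W2' [h1 h2 h3 h4 h5]] : exists W2' : walk, [/\ W2'.1 = wfin W1, wpath W2',
    wverts W2' =i wverts W2, size W2'.2 = size W2.2 & forall v, ends W2' v = ends W2 v].
  case: (eqVneq (wfin W1) W2.1) => ha; first by exists W2; split.
  exists (rwalk W2); split.
  - move: hW2; rewrite /ends (negbTE ha) /=; by case: eqP.
  - exact: rwalk_path.
  - exact: rwalk_verts.
  - exact: rwalk_size.
  - exact: rwalk_ends.
exists W2, (W1.1, W1.2 ++ W2'.2); split => //.
- move: pW1 h2; rewrite /wpath /wfin /= cat_path => -> /=; by rewrite -/(wfin W1) -h1.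
- move=> v; rewrite [in RHS]inE -h3 /wverts /= !inE mem_cat.
  case: (eqVneq v W2'.1) => [->|hv].
    rewrite orbT /=; move: (mem_last W1.1 W1.2); rewrite -/(wfin W1) -h1 in_cons.
    by case/orP => [->|->] //; rewrite orbT.
  by rewrite /= orbA.
- by rewrite /= ?size_cat h4.
- move=> v; rewrite -h5 /ends /wfin /= last_cat -/(wfin W1) -h1.
  by case: (v == W1.1); case: (v == W2'.1); case: (v == last W2'.1 W2'.2).
Qed.

Lemma sum_eq1 (a : V) : \sum_(v : V) (v == a : nat) = 1.
Proof. by rewrite (bigD1 a) //= eqxx big1 // => v /negbTE ->. Qed.

Lemma sum_endc L : \sum_(v : V) endc L v = 2 * size L.
Proof.
elim: L => [|w L IH]; first by rewrite /endc /= big1.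
rewrite /endc /=; under eq_bigr do rewrite -/(endc L _).
rewrite big_split /= IH /ends big_split /= !sum_eq1; lia.
Qed.

Lemma endc_cat L1 L2 v : endc (L1 ++ L2) v = endc L1 v + endc L2 v.
Proof. by rewrite /endc map_cat sumn_cat. Qed.

Section Sel.
Variable d : V -> bool.

Fixpoint sel (b : bool) (x : V) (p : seq V) : seq walk :=
  match p with
  | [::] => [::]
  | y :: p' => if b then (x, [:: y]) :: sel (b (+) d y) y p' else sel (b (+) d y) y p'
  end.

Lemma sel_size p b x : size (sel b x p) + size (sel (~~ b) x p) = size p.
Proof.
elim: p b x => [|y p IH] b x //=.
rewrite addNb; case: b => /=; move: (IH (true (+) d y) y) (IH (false (+) d y) y);
  rewrite /= ?addNb; case: (d y) => /= h1 h2; lia.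
Qed.

Lemma sel_path p b x : path e x p -> all wpath (sel b x p).
Proof.
elim: p b x => [|y p IH] b x //= /andP [exy pp].
case: b => /=; last exact: IH.
by rewrite /wpath /= exy IH.
Qed.

Lemma sel_out p b x v : v \notin x :: p -> endc (sel b x p) v = 0.
Proof.
elim: p b x => [|y p IH] b x //.
rewrite !in_cons negb_or => /andP [vx]; rewrite negb_or => /andP [vy vp].
case: b => /=; rewrite ?IH ?in_cons ?negb_or ?vy //.
by rewrite /endc /= -/(endc _ _) IH ?in_cons ?negb_or ?vy // /ends /wfin /= (negbTE vx) (negbTE vy).
Qed.

Lemma sel_mid p b x v : v \in p -> v != last x p -> v != x -> count (pred1 v) p = 1 ->
  odd (endc (sel b x p) v) = d v.
Proof.
elim: p b x => [|y p IH] b x //.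
case: (eqVneq v y) => [->|vy].
  move=> _ hl yx /= /eqP; rewrite eqxx add1n eqSS => /eqP h0.
  have yp : y \notin p by apply/count_memPn.
  case: p IH hl h0 yp => [|z p] IH hl h0 yp; first by rewrite /= eqxx in hl.
  move: yp; rewrite in_cons negb_or => /andP [yz yp].
  have hr : endc (sel (b (+) d y) y (z :: p)) y = (b (+) d y : nat).
    rewrite /= ; case: (b (+) d y); rewrite ?/endc /= -?/(endc _ _) sel_out ?in_cons ?negb_or ?yz //.
    by rewrite /ends /wfin /= eqxx (negbTE yz).
  rewrite /=; case: b hr => hr; rewrite ?/endc /= -?/(endc _ _) hr.
    by rewrite /ends /wfin /= eqxx (negbTE yx); case: (d y).
  by case: (d y).
rewrite in_cons (negbTE vy) /= => vp hl vx.
rewrite eq_sym (negbTE vy) add0n => hc.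
case: b; last exact: IH.
have -> : endc ((x, [:: y]) :: sel (true (+) d y) y p) v = ends (x, [:: y]) v + endc (sel (true (+) d y) y p) v by [].
by rewrite oddD IH // /ends /wfin /= (negbTE vx) (negbTE vy).
Qed.

End Sel.

End Euler.

Section Forest.
Variable V : finType.
Variable t : rel V.
Hypothesis tsym : symmetric t.
Hypothesis tirr : irreflexive t.
Hypothesis tacyc : forall c, ~ simple_cycle t c.

Definition nbr (U : {set V}) x := [set y in U | t x y].
Definition Dsum (U : {set V}) := \sum_(x in U) #|nbr U x|.

Lemma mk_cycle x p y : uniq (x :: p) -> path t x p -> y \in p -> y != head x p ->
  t x y -> False.
Proof.
move=> u pp yp hy txy.
case/splitPr: yp u pp hy => p1 p2 u pp hy.
apply: (tacyc (c := x :: rcons p1 y)); split.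
- case: p1 hy {u pp} => [|z p1] /=; first by rewrite eqxx.
  by rewrite size_rcons.
- apply: subseq_uniq u; rewrite -cats1 -[y :: p2]cat1s catA -cat_cons; exact: prefix_subseq.
- rewrite /cycle !rcons_path; move: pp; rewrite cat_path /= => /and3P [-> -> _] /=.
  by rewrite last_rcons tsym.
Qed.

Lemma close_cyc x p y1 y2 : uniq (x :: p) -> path t x p -> t x y1 -> t x y2 ->
  y1 != y2 -> y1 \in x :: p -> y2 \in x :: p -> False.
Proof.
move=> u pp t1 t2 h12.
have nx : forall y, t x y -> y \in x :: p -> y \in p.
  move=> y txy; rewrite in_cons => /orP [/eqP hy|//].
  by move: txy; rewrite hy tirr.
move=> /(nx _ t1) i1 /(nx _ t2) i2.
case: (eqVneq y1 (head x p)) => hh.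
  apply: (mk_cycle u pp i2 _ t2); by rewrite -hh eq_sym.
exact: (mk_cycle u pp i1 hh t1).
Qed.

Lemma grow (U : {set V}) m x p : #|V| - size (x :: p) <= m -> uniq (x :: p) ->
  path t x p -> {subset x :: p <= U} ->
  (forall z, z \in U -> 1 < #|nbr U z|) -> False.
Proof.
elim: m x p => [|m IH] x p hm u pp sub deg2;
  have /card_gt1P [y1 [y2 [h1 h2 h12]]] := deg2 x (sub x (mem_head _ _));
  move: h1 h2; rewrite !inE => /andP [y1U txy1] /andP [y2U txy2].
- have ext : forall y, y \notin x :: p -> False.
    move=> y yn; have u2 : uniq (y :: x :: p) by apply/andP; split.
    move/card_uniqP: u2 => /= hs; move: (max_card (mem (y :: x :: p))).
    rewrite hs /=; move: hm; rewrite /=; lia.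
  case: (boolP (y1 \in x :: p)) => [i1|/ext //].
  case: (boolP (y2 \in x :: p)) => [i2|/ext //].
  exact: (close_cyc u pp txy1 txy2 h12 i1 i2).
- have ext : forall y, y \in U -> t x y -> y \notin x :: p -> False.
    move=> y yU txy yn; apply: (IH y (x :: p)).
    + by move: hm; rewrite /=; lia.
    + by apply/andP; split.
    + by rewrite /= tsym txy pp.
    + by move=> z; rewrite in_cons => /orP [/eqP ->|/sub].
    + exact: deg2.
  case: (boolP (y1 \in x :: p)) => [i1|/ext]; last by apply.
  case: (boolP (y2 \in x :: p)) => [i2|/ext]; last by apply.
  exact: (close_cyc u pp txy1 txy2 h12 i1 i2).
Qed.

Lemma lowdeg (U : {set V}) x : x \in U -> exists2 l, l \in U & #|nbr U l| <= 1.
Proof.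
move=> xU; case: (boolP [exists l in U, #|nbr U l| <= 1]) => [/existsP [l /andP [h1 h2]]|hn].
  by exists l.
exfalso; apply: (@grow U #|V| x [::]) => //.
- by rewrite leq_subr.
- by move=> z; rewrite inE => /eqP ->.
- move=> z zU; move: hn; rewrite negb_exists => /forallP /(_ z).
  by rewrite zU /= ltnNge.
Qed.

Lemma Dsplit (U : {set V}) l : l \in U -> Dsum U = Dsum (U :\ l) + 2 * #|nbr U l|.
Proof.
move=> lU; rewrite /Dsum (bigD1 l) //=.
have e1 : forall x, x \in U -> x != l -> #|nbr U x| = #|nbr (U :\ l) x| + t x l.
  move=> x xU xl; rewrite (cardsD1 l) addnC; congr (_ + _).
    by apply: eq_card => y; rewrite !inE; case: (y == l); case: (y \in U).
  by rewrite inE lU.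
rewrite (eq_bigr (fun x => #|nbr (U :\ l) x| + t x l)); last first.
  by move=> x /andP [xU xl]; rewrite e1.
rewrite big_split /=.
have e2 : \sum_(i | (i \in U) && (i != l)) #|nbr (U :\ l) i| = \sum_(i in U :\ l) #|nbr (U :\ l) i|.
  by apply: eq_bigl => x; rewrite !inE andbC.
have e3 : \sum_(i | (i \in U) && (i != l)) (t i l : nat) = #|nbr U l|.
  rewrite -big_mkcondr /= sum1dep_card /nbr; apply: eq_card => y; rewrite !inE.
  case: (eqVneq y l) => [->|yl]; first by rewrite tirr !andbF.
  by rewrite andbT tsym.
rewrite e2 e3; lia.
Qed.

Lemma forest m (U : {set V}) : #|U| = m.+1 -> Dsum U + 2 <= 2 * #|U|.
Proof.
elim: m U => [|m IH] U hU.
  move/eqP/cards1P: hU => [x ->]; rewrite /Dsum big_set1 cards1.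
  suff -> : #|nbr [set x] x| = 0 by [].
  apply: eq_card0 => y; rewrite !inE; case: eqP => [->|] //; by rewrite tirr.
have [x xU] : exists x, x \in U by apply/set0Pn; rewrite -card_gt0 hU.
have [l lU hl] := lowdeg xU.
have hU' : #|U :\ l| = m.+1 by move: hU; rewrite (cardsD1 l) lU add1n => -[].
have := IH _ hU'; rewrite (Dsplit lU) (cardsD1 l U) lU; lia.
Qed.

End Forest.


Lemma sum_pairs (V : finType) (E : V -> V -> bool) (v : V) :
  \sum_(p in [pred p : V * V | E p.1 p.2]) ((v == p.1) + (v == p.2)) = \sum_y (E v y + E y v).
Proof.
rewrite -(pair_big_dep xpredT (fun x y => E x y) (fun x y => (v == x) + (v == y))) /=.
have h1 : \sum_x \sum_(y | E x y) (v == x : nat) = \sum_y (E v y : nat).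
  rewrite (bigD1 v) //= [X in _ + X]big1 => [|x xv]; last first.
    by apply: big1 => y _; rewrite eq_sym (negbTE xv).
  by rewrite addn0 big_mkcond /= eqxx.
have h2 : \sum_x \sum_(y | E x y) (v == y : nat) = \sum_x (E x v : nat).
  apply: eq_bigr => x _; rewrite big_mkcond /= (bigD1 v) //= eqxx [X in _ + X]big1 => [|y yv].
    by case: (E x v).
  by rewrite eq_sym (negbTE yv); case: (E x y).
rewrite big_split /=.
under eq_bigr do rewrite big_split /=.
by rewrite big_split /= h1 h2.
Qed.

Section TreeEdges.
Variable V : finType.
Variables e t : rel V.
Hypothesis tsub : subrel t e.
Hypothesis tsym : symmetric t.
Hypothesis tirr : irreflexive t.

Definition Ep : pred (V * V) := fun p => t p.1 p.2 && (enum_rank p.1 < enum_rank p.2).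
Definition Tw : seq (walk V) := [seq (p.1, [:: p.2]) | p <- enum Ep].

Lemma Tw_path : all (wpath e) Tw.
Proof.
apply/allP => w /mapP [p]; rewrite mem_enum => /andP [tp _] ->.
by rewrite /wpath /= tsub.
Qed.

Lemma Tw_endc v : endc Tw v = degree t v.
Proof.
rewrite /endc -map_comp sumnE big_map big_enum /=.
rewrite (eq_bigl [pred p : V * V | Ep (p.1, p.2)]); last by case.
rewrite (sum_pairs (fun x y => Ep (x, y))) /degree.
rewrite -sum1dep_card [RHS]big_mkcond /=; apply: eq_bigr => y _.
rewrite /Ep /= [t y v]tsym.
case tvy: (t v y) => //=.
have : enum_rank v != enum_rank y.
  by rewrite (inj_eq enum_rank_inj); apply/negP => /eqP hv; move: tvy; rewrite hv tirr.
case: (ltngtP (enum_rank v) (enum_rank y)) => //.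
by move/val_inj => ->; rewrite eqxx.
Qed.

Lemma Tw_covR x y : t x y -> covR Tw x y.
Proof.
move=> txy; apply/hasP.
have hne : enum_rank x != enum_rank y.
  by rewrite (inj_eq enum_rank_inj); apply/negP => /eqP hv; move: txy; rewrite hv tirr.
case: (ltngtP (enum_rank x) (enum_rank y)) => [lt|lt|/val_inj h]; last by rewrite h eqxx in hne.
  exists (x, [:: y]); last by rewrite /wverts /= !inE !eqxx orbT.
  by apply/mapP; exists (x, y) => //; rewrite mem_enum unfold_in /Ep /= txy lt.
exists (y, [:: x]); last by rewrite /wverts /= !inE !eqxx orbT.
by apply/mapP; exists (y, x) => //; rewrite mem_enum unfold_in /Ep /= tsym txy lt.
Qed.

Lemma Tw_totlen : totlen Tw = size Tw.
Proof. rewrite /totlen /Tw -map_comp; by elim: (enum Ep) => //= p s ->. Qed.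

End TreeEdges.

Lemma sel_totlen (V : finType) d b (x : V) p : totlen (sel d b x p) = size (sel d b x p).
Proof.
elim: p b x => [|y p IH] b x //=; case: b => /=; by rewrite ?IH // /totlen /= -/(totlen _) IH.
Qed.

Lemma sum_even (V : finType) (P : pred V) (F : V -> nat) :
  (forall v, P v -> ~~ odd (F v)) -> ~~ odd (\sum_(v | P v) F v).
Proof.
move=> h; apply: (big_ind (fun n => ~~ odd n)) => //.
by move=> a b ha hb; rewrite oddD (negbTE ha) (negbTE hb).
Qed.

Theorem theorem1 (V : finType) (e : rel V) (t : rel V) (c : seq V) :
  simple_graph e ->
  two_vertex_connected e ->
  min_spanning_tree e t ->
  simple_cycle e c ->
  (forall v : V, odd (degree t v) -> v \in c) ->
  exists (x0 : V) (w : seq V), tsp_tour e x0 w /\ 3 * size w <= 4 * #|V|.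
Proof.
move=> [esym eirr] [n3 [econn _]] [[tsym tsub tconn tacyc] _] [csz cuq ccyc] hodd.
have tirr : irreflexive t.
  by move=> x; apply/negbTE/negP => /tsub; rewrite eirr.
case: c csz cuq ccyc hodd => [|x0 r] // csz cuq ccyc hodd.
have [k kdef] : {k | k = (size r).+1} by exists (size r).+1.
have kn : k <= #|V| by rewrite kdef -[(size r).+1]/(size (x0 :: r)) -(card_uniqP cuq) max_card.
have pc : path e x0 (rcons r x0) by [].
have [wB [pB lB aB sB]] : exists w', [/\ path e x0 w', last x0 w' = x0, (forall v, v \in x0 :: w')
     & size w' <= size (rcons r x0) + 2 * (#|V| - k)].
  apply: extend_walk => //; last by rewrite last_rcons.
  have hcard : #|[pred v | v \notin x0 :: rcons r x0]| + k = #|V|.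
    rewrite kdef -[(size r).+1]/(size (x0 :: r)) -(card_uniqP cuq) -(cardC (mem (x0 :: r))) addnC; congr (_ + _).
    by apply: eq_card => v; rewrite !inE mem_rcons !in_cons; case: (v == x0).
  by rewrite -hcard addnK.
rewrite size_rcons -kdef in sB.
pose d := fun y => odd (degree t y).
have [b hb] : exists b, 2 * size (sel d b x0 (rcons r x0)) <= k.
  have := sel_size d (rcons r x0) true x0; rewrite size_rcons -kdef => h.
  case: (leqP (2 * size (sel d true x0 (rcons r x0))) k) => hl; first by exists true.
  exists false; move: h; rewrite /=; lia.
pose J := sel d b x0 (rcons r x0).
pose L := Tw t ++ J.
have allL : all (wpath e) L by rewrite all_cat Tw_path // sel_path.
have endL : forall v, endc L v = degree t v + endc J v.
  by move=> v; rewrite endc_cat Tw_endc.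
have ev1 : forall v, v != x0 -> ~~ odd (endc L v).
  move=> v vx; rewrite endL oddD.
  case: (boolP (v \in r)) => vr.
    rewrite /J sel_mid //.
    - by rewrite /d; case: (odd (degree t v)).
    - by rewrite mem_rcons in_cons vr orbT.
    - by rewrite last_rcons.
    - move: cuq => /= /andP [_ ur].
      by rewrite -cats1 count_cat (count_uniq_mem _ ur) vr /= eq_sym (negbTE vx).
  rewrite /J sel_out; last by rewrite in_cons mem_rcons in_cons (negbTE vx) (negbTE vr).
  case: (boolP (odd (degree t v))) => // /hodd; by rewrite in_cons (negbTE vx) (negbTE vr).
have ev : forall v, ~~ odd (endc L v).
  move=> v; case: (eqVneq v x0) => [->|]; last exact: ev1.
  have := sum_endc L; rewrite (bigD1 x0) //= => h.
  have he := @sum_even V (fun v => v != x0) (endc L) ev1.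
  move: h => /(congr1 odd); rewrite oddD (negbTE he) oddM /=.
  by case: (odd (endc L x0)).
have covTw : forall x y, t x y -> covR L x y.
  by move=> x y txy; rewrite /covR has_cat; apply/orP; left; exact: (Tw_covR tsym tirr txy).
have covall : forall v, cov L v.
  move=> v.
  have [u uv] : exists u, u != v.
    have /card_gt1P [a [b' [_ _ ab]]] : 1 < #|[set: V]| by rewrite cardsT; lia.
    case: (eqVneq a v) => [av|av]; last by exists a.
    by exists b'; rewrite -av eq_sym.
  case/connectP: (tconn v u) => p pp lp.
  case: p pp lp => [|z p] /=; first by move=> _ hu; rewrite hu eqxx in uv.
  move=> /andP [tvz _] _; move: (covTw _ _ tvz).
  by apply: sub_has => w /andP [].
have conn : forall x y, cov L x -> cov L y -> connect (covR L) x y.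
  move=> x y _ _; apply: connect_sub (tconn x y) => a b' tab.
  by apply: connect1; apply: covTw.
have [nL hnL] : exists nL, size L = nL.+1.
  exists (size L).-1; rewrite prednK // lt0n size_eq0; apply/eqP => hL0; move: (covall x0); by rewrite /cov hL0.
have [x1 [w1 [p1 l1 s1 c1]]] := euler esym hnL allL ev conn.
have sTw : 2 * size (Tw t) + 2 <= 2 * #|V|.
  rewrite -sum_endc.
  have -> : \sum_v endc (Tw t) v = Dsum t [set: V].
    rewrite /Dsum [RHS](eq_bigl xpredT); last by move=> v; rewrite in_setT.
    apply: eq_bigr => v _; rewrite Tw_endc // /degree; apply: eq_card => y.
    by rewrite !inE.
  rewrite -cardsT; apply: (@forest _ _ tsym tirr tacyc #|V|.-1).
  by rewrite cardsT; lia.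
have s1' : size w1 = size (Tw t) + size J.
  by rewrite s1 /totlen /L map_cat sumn_cat -/(totlen _) -/(totlen _) Tw_totlen sel_totlen.
case: (leqP (2 * #|V|) (3 * k)) => hk.
  exists x0, wB; split; first by split.
  lia.
exists x1, w1; split; first by split => // v; apply: c1.
rewrite s1'; move: hb; rewrite -/J; lia.
Qed.
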